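(* Let $G=(V,E,c_V^G,c_E^G)$ and $H=(V,E,c_V^H,c_E^H)$ be two capacitated graphs on the same graph $(V,E)$ that differ only in the capacity of one vertex $s$ (all other vertex capacities and all edge capacities coincide). Assume that in the executions of Rising-Tide on $G$ and on $H$ no two vertices become saturated simultaneously, and that the dependency graphs coincide, $D_G=D_H$. Let $\mu_G,\mu_H$ be the outputs of Rising-Tide on $G$ and $H$. Then \[\sum_i\left|\Big(c_V^G(i)-\sum_j\mu_G(i,j)\Big)-\Big(c_V^H(i)-\sum_j\mu_H(i,j)\Big)\right|\le|c_V^G(s)-c_V^H(s)|.\]
   Context: Capacitated graphs have nonnegative vertex capacities $c_V$ and edge capacities $c_E$; edges may include self-loops, and in $\sum_j\mu(i,j)$ a self-loop at $i$ counts once. A feasible fractional matching $\mu:E\to\mathbb{R}_{\ge0}$ satisfies $\mu(e)\le c_E(e)$ and $\sum_j\mu(i,j)\le c_V(i)$. Vertex $i$ is saturated if $\sum_j\mu(i,j)=c_V(i)$; edge $e$ is saturated if $\mu(e)=c_E(e)$. Rising-Tide: set $E'=\{e\in E:c_E(e)>0\}$ and $\mu\equiv0$; while $E'\ne\emptyset$: choose the maximum $\delta\ge0$ such that $\mu+\delta\mathbf{1}_{E'}$ is feasible, set $\mu\gets\mu+\delta\mathbf{1}_{E'}$, and remove from $E'$ every edge $(i,j)$ such that $i$, $j$, or $(i,j)$ is saturated; return $\mu$. Dependency graph $D_G$: the directed graph on $V$ which, for each edge $(i,j)\in E$, contains $j\to i$ if $i$ is saturated at the moment $(i,j)$ is removed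 from $E'$ in the execution on $G$, and contains $i\to j$ if $j$ is saturated at that moment. *)

(* Defs.v *)
From HB Require Import structures.
From mathcomp Require Import all_boot all_order all_algebra.
Set Implicit Arguments. Unset Strict Implicit. Unset Printing Implicit Defensive.
Import Order.TTheory GRing.Theory Num.Theory.
Local Open Scope ring_scope.

(* A capacitated graph on a finite vertex type V:
   - the edge set is a symmetric relation [E : rel V] (E i i = self-loop at i);
   - vertex capacities [cV : V -> R], edge capacities [cE : V -> V -> R]
     (symmetric, only meaningful on edges).
   A fractional matching is a (symmetric) function [mu : V -> V -> R],
   only meaningful on edges.  The load of i is \sum_{j : E i j} mu i j;
   a self-loop at i occurs once in this sum. *)

Section RisingTide.
Variables (R : realFieldType) (V : finType) (E : rel V)
          (cV : V -> R) (cE : V -> V -> R).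

Definition load (mu : V -> V -> R) (i : V) : R := \sum_(j | E i j) mu i j.

Definition feasible (mu : V -> V -> R) : Prop :=
  (forall i j, E i j -> 0 <= mu i j /\ mu i j <= cE i j) /\
  (forall i, load mu i <= cV i).

Definition vsat (mu : V -> V -> R) (i : V) : bool := load mu i == cV i.
Definition esat (mu : V -> V -> R) (i j : V) : bool := mu i j == cE i j.

(* mu + d * 1_{Ep}; Ep is a (symmetric) set of ordered pairs of endpoints *)
Definition incr (mu : V -> V -> R) (d : R) (Ep : {set V * V}) : V -> V -> R :=
  fun i j => mu i j + (if (i, j) \in Ep then d else 0).

Definition is_max_delta (mu : V -> V -> R) (Ep : {set V * V}) (d : R) : Prop :=
  0 <= d /\ feasible (incr mu d Ep) /\
  forall d', 0 <= d' -> feasible (incr mu d' Ep) -> d' <= d.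

Definition initial_edges : {set V * V} :=
  [set p | E p.1 p.2 && (0 < cE p.1 p.2)].

Definition surviving (mu' : V -> V -> R) (Ep : {set V * V}) : {set V * V} :=
  [set p in Ep | ~~ [|| vsat mu' p.1, vsat mu' p.2 | esat mu' p.1 p.2]].

(* A complete execution of Rising-Tide with n iterations:
   Ep k = E' before iteration k, mu k = mu before iteration k. *)
Definition rising_tide_run (n : nat) (Ep : nat -> {set V * V})
    (mu : nat -> V -> V -> R) : Prop :=
  Ep 0%N = initial_edges /\ mu 0%N = (fun _ _ => 0) /\
  (forall k, (k < n)%N ->
     Ep k != set0 /\
     exists d, is_max_delta (mu k) (Ep k) d /\
               mu k.+1 = incr (mu k) d (Ep k) /\
               Ep k.+1 = surviving (mu k.+1) (Ep k)) /\
  Ep n = set0.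

Definition no_simultaneous_saturation (n : nat) (mu : nat -> V -> V -> R) : Prop :=
  forall k, (k < n)%N ->
    (#|[set v | vsat (mu k.+1) v && ~~ vsat (mu k) v]| <= 1)%N.

Definition dep_arc (n : nat) (Ep : nat -> {set V * V})
    (mu : nat -> V -> V -> R) (u v : V) : Prop :=
  exists k, (k < n)%N /\ exists i j,
    (i, j) \in Ep k /\ (i, j) \notin Ep k.+1 /\
    ((u = j /\ v = i /\ vsat (mu k.+1) i) \/
     (u = i /\ v = j /\ vsat (mu k.+1) j)).

End RisingTide.

(* Main.v *)
Require Import Defs.
From mathcomp Require Import all_boot all_order all_algebra.
From mathcomp Require Import ring lra.
From Stdlib Require Import ClassicalEpsilon.
Import Order.TTheory GRing.Theory Num.Theory.
Local Open Scope ring_scope.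
Set Implicit Arguments. Unset Strict Implicit.

Definition asb (P : Prop) : bool := if excluded_middle_informative P then true else false.
Lemma asbP (P : Prop) : reflect P (asb P).
Proof. by rewrite /asb; case: excluded_middle_informative => h; constructor. Qed.

Section Run.
Variables (R : realFieldType) (V : finType) (E : rel V)
          (cV : V -> R) (cE : V -> V -> R).
Hypotheses (symE : forall i j, E i j = E j i)
    (symcE : forall i j, cE i j = cE j i)
    (cE_ge0 : forall i j, E i j -> 0 <= cE i j).
Variables (n : nat) (Ep : nat -> {set V * V}) (mu : nat -> V -> V -> R).
Hypothesis run : rising_tide_run E cV cE n Ep mu.

Lemma stepP k : (k < n)%N -> exists d, 0 <= d /\ feasible E cV cE (mu k.+1) /\
   mu k.+1 = incr (mu k) d (Ep k) /\ Ep k.+1 = surviving E cV cE (mu k.+1) (Ep k).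
Proof.
case: run => _ [_ [H _]] kn; have [_ [d [[d0 [f _]] [e1 e2]]]] := H k kn.
by exists d; split => //; split; [rewrite e1 | split].
Qed.

Lemma Ep_sub k : (k < n)%N -> Ep k.+1 \subset Ep k.
Proof.
move=> /stepP [d [_ [_ [_ ->]]]]; apply/subsetP => p; rewrite inE.
by case/andP.
Qed.

Lemma Ep_dec m m' : (m <= m')%N -> (m' <= n)%N -> Ep m' \subset Ep m.
Proof.
elim: m' => [|m' IH]; first by rewrite leqn0 => /eqP ->.
rewrite leq_eqVlt => /orP [/eqP -> //|]; rewrite ltnS => mm' m'n.
apply: subset_trans (Ep_sub m'n) (IH mm' (ltnW m'n)).
Qed.

Lemma mu_frozen m m' p : p \notin Ep m -> (m <= m')%N -> (m' <= n)%N ->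
  mu m' p.1 p.2 = mu m p.1 p.2.
Proof.
move=> pm; elim: m' => [|m' IH]; first by rewrite leqn0 => /eqP ->.
rewrite leq_eqVlt => /orP [/eqP -> //|]; rewrite ltnS => mm' m'n.
have [d [_ [_ [-> _]]]] := stepP m'n.
rewrite /incr -surjective_pairing.
have -> : (p \in Ep m') = false.
  apply/negbTE; apply: contra pm; exact: (subsetP (Ep_dec mm' (ltnW m'n))).
by rewrite addr0 IH // ltnW.
Qed.

Lemma mu_sym m : (m <= n)%N -> (forall i j, mu m i j = mu m j i) /\
   (forall i j, ((i, j) \in Ep m) = ((j, i) \in Ep m)).
Proof.
case: run => H0 [Hm0 _].
elim: m => [|m IH] mn.
  by rewrite H0 Hm0; split=> // i j; rewrite !inE /= symE symcE.
have [s1 s2] := IH (ltnW mn).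
have [d [_ [_ [e1 e2]]]] := stepP mn.
have s3 : forall i j, mu m.+1 i j = mu m.+1 j i.
  by move=> i j; rewrite e1 /incr s1 s2.
split=> // i j; rewrite e2 !inE /= s2; congr (_ && ~~ _).
rewrite /esat (s3 i j) (symcE i j).
by case: (vsat _ _ _ i); case: (vsat _ _ _ j).
Qed.

Lemma mu_const m p q : (m <= n)%N -> p \in Ep m -> q \in Ep m ->
  mu m p.1 p.2 = mu m q.1 q.2.
Proof.
case: run => H0 [Hm0 _].
elim: m => [|m IH] mn; first by rewrite Hm0.
have [d [_ [_ [e1 e2]]]] := stepP mn.
move=> pm qm.
have sub := Ep_sub mn.
have pm' := subsetP sub _ pm; have qm' := subsetP sub _ qm.
by rewrite e1 /incr -!surjective_pairing pm' qm' (IH (ltnW mn)).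
Qed.

Lemma mu_step_le k i j : (k < n)%N -> mu k i j <= mu k.+1 i j.
Proof.
move=> /stepP [d [d0 [_ [-> _]]]]; rewrite /incr lerDl.
by case: ifP.
Qed.

Lemma load_mono m m' i : (m <= m')%N -> (m' <= n)%N ->
  load E (mu m) i <= load E (mu m') i.
Proof.
elim: m' => [|m' IH]; first by rewrite leqn0 => /eqP ->.
rewrite leq_eqVlt => /orP [/eqP -> //|]; rewrite ltnS => mm' m'n.
apply: le_trans (IH mm' (ltnW m'n)) _.
by apply: ler_sum => j _; apply: mu_step_le.
Qed.

Lemma removal p : p \in Ep 0 -> exists k, (k < n)%N /\ p \in Ep k /\ p \notin Ep k.+1.
Proof.
move=> p0.
have H : forall m, (m <= n)%N -> p \in Ep m \/
   exists k, (k < m)%N /\ p \in Ep k /\ p \notin Ep k.+1.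
  elim=> [|m IH] mn; first by left.
  case: (IH (ltnW mn)) => [pm|[k [km rest]]].
    case: (boolP (p \in Ep m.+1)) => h; first by left.
    by right; exists m.
  by right; exists k; split => //; apply: ltnW.
case: run => _ [_ [_ Hn]].
case: (H n (leqnn n)) => [|//]; by rewrite Hn inE.
Qed.

Lemma arc_data u v : dep_arc E cV n Ep mu u v ->
  exists k, (k < n)%N /\ exists p, p \in Ep k /\ p \notin Ep k.+1 /\
   (p = (v, u) \/ p = (u, v)) /\ vsat E cV (mu k.+1) v.
Proof.
case=> k [kn [i [j [pin [pout H]]]]]; exists k; split => //; exists (i, j).
case: H => [[-> [-> h]]|[-> [-> h]]]; by repeat split; auto.
Qed.

Lemma arc_sat u v : dep_arc E cV n Ep mu u v -> load E (mu n) v = cV v.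
Proof.
case/arc_data => k [kn [p [_ [_ [_ /eqP sat]]]]].
apply/le_anti/andP; split.
  have [k' kE] : exists k', n = k'.+1 by case: (n) kn => // n' _; exists n'.
  have kn' : (k' < n)%N by rewrite kE.
  have [d [_ [[_ f] _]]] := stepP kn'; rewrite kE; exact: f.
by rewrite -sat; apply: load_mono.
Qed.

Lemma arc_eq u u' v : dep_arc E cV n Ep mu u v -> dep_arc E cV n Ep mu u' v ->
  mu n v u = mu n v u'.
Proof.
move=> /arc_data [k [kn [p [pin [pout [pe sat]]]]]].
move=> /arc_data [k' [kn' [p' [pin' [pout' [pe' sat']]]]]].
have later : forall (a b : nat) (q' : V * V), (a < b)%N -> (b < n)%N -> vsat E cV (mu a.+1) v ->
    q' \in Ep b -> (q' = (v, u') \/ q' = (u', v)) \/ (q' = (v, u) \/ q' = (u, v)) -> False.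
  move=> a b q' ab bn sa qb qe.
  have : q' \in Ep a.+1 by apply: (subsetP (Ep_dec ab (ltnW bn))).
  have [d [_ [_ [_ ->]]]] := stepP (leq_ltn_trans (ltnW ab) bn).
  rewrite inE => /andP [_].
  by case: qe => [[]|[]] -> /=; rewrite sa ?orbT.
have ekk : k = k'.
  case: (ltngtP k k') => // h; exfalso.
    by apply: (later k k' p') => //; left.
  by apply: (later k' k p) => //; right.
subst k'.
have [s1 _] := mu_sym (leqnn n).
have mp : mu n v u = mu n p.1 p.2 by case: pe => ->.
have mp' : mu n v u' = mu n p'.1 p'.2 by case: pe' => ->.
rewrite mp mp' (mu_frozen pout kn (leqnn n)) (mu_frozen pout' kn (leqnn n)).
have [d [_ [_ [e1 _]]]] := stepP kn.
by rewrite e1 /incr -!surjective_pairing pin pin' (mu_const (ltnW kn) pin pin').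
Qed.

Lemma noarc_eq i j : E i j -> ~ dep_arc E cV n Ep mu j i -> ~ dep_arc E cV n Ep mu i j ->
  mu n i j = cE i j.
Proof.
move=> eij na1 na2.
case: (boolP ((i, j) \in Ep 0)) => h.
  have [k [kn [pin pout]]] := removal h.
  have [d [_ [_ [e1 e2]]]] := stepP kn.
  have := pout; rewrite {1}e2 inE pin /= negbK.
  case/or3P => [si|sj|/eqP se].
  - by exfalso; apply: na1; exists k; split => //; exists i, j; do 2 split => //; left.
  - by exfalso; apply: na2; exists k; split => //; exists i, j; do 2 split => //; right.
  - by rewrite (mu_frozen (p := (i, j)) pout kn (leqnn n)).
case: run => H0 [Hm0 _].
rewrite (mu_frozen (p := (i, j)) h (leq0n n) (leqnn n)) Hm0.
move: h; rewrite H0 inE /= eij /= -leNgt => c0.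
by apply/le_anti; rewrite c0 cE_ge0.
Qed.

End Run.

Lemma sum_const_abs (R : realFieldType) (V : finType) (Q : pred V) (x : R) :
  \sum_(j | Q j) `|x| = `|\sum_(j | Q j) x|.
Proof.
have e : forall y : R, \sum_(j | Q j) y = y *+ #|[pred j | Q j]|.
  by move=> y; rewrite -sumr_const.
by rewrite !e normrMn.
Qed.

Lemma abstract_ineq (R : realFieldType) (V : finType) (E a : rel V)
  (symE : forall i j, E i j = E j i)
  (cG cH : V -> R) (s : V) (cV_other : forall i, i != s -> cG i = cH i)
  (mG mH : V -> V -> R) (tG tH : V -> R)
  (symG : forall i j, mG i j = mG j i) (symH : forall i j, mH i j = mH j i)
  (h1G : forall i j, a j i -> mG i j = tG i) (h1H : forall i j, a j i -> mH i j = tH i)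
  (h2 : forall i j, E i j -> ~~ a j i -> ~~ a i j -> mG i j = mH i j)
  (h4G : forall i j, E i j -> a j i -> load E mG i = cG i)
  (h4H : forall i j, E i j -> a j i -> load E mH i = cH i) :
  \sum_(i : V) `|(cG i - load E mG i) - (cH i - load E mH i)| <= `|cG s - cH s|.
Proof.
pose dt i := tG i - tH i.
pose dc i := cG i - cH i.
have hL : forall i, load E mG i - load E mH i =
   \sum_(j | E i j && a j i) dt i + \sum_(j | E i j && ~~ a j i && a i j) dt j.
  move=> i; rewrite /load -sumrB (bigID (fun j => a j i)) /=.
  rewrite [X in _ + X](bigID (fun j => a i j)) /=.
  rewrite [X in _ + (_ + X)]big1 ?addr0; last first.
    by move=> j /andP [/andP [e h] h']; rewrite h2 ?subrr.
  congr (_ + _); apply: eq_bigr.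
    by move=> j /andP [_ h]; rewrite /dt h1G // h1H.
  by move=> j /andP [_ h]; rewrite symG symH /dt h1G // h1H.
have hv : forall i, `|(cG i - load E mG i) - (cH i - load E mH i)| +
    \sum_(j | E i j && a j i) `|dt i| <=
    `|dc i| + \sum_(j | E i j && ~~ a j i && a i j) `|dt j|.
  move=> i.
  have key : (cG i - load E mG i) - (cH i - load E mH i) =
      dc i - (load E mG i - load E mH i) by rewrite /dc; ring.
  have hO : `|\sum_(j | E i j && ~~ a j i && a i j) dt j| <=
      \sum_(j | E i j && ~~ a j i && a i j) `|dt j| by apply: ler_norm_sum.
  case: (pickP (fun j => E i j && a j i)) => [j /andP [eij aji] | none].
    have z : (cG i - load E mG i) - (cH i - load E mH i) = 0.
      by rewrite (h4G i j eij aji) (h4H i j eij aji) !subrr.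
    rewrite z normr0 add0r sum_const_abs.
    move: key; rewrite z hL => key.
    have -> : \sum_(j | E i j && a j i) dt i =
        dc i - \sum_(j | E i j && ~~ a j i && a i j) dt j.
      by lra.
    apply: le_trans (ler_normB _ _) _.
    by rewrite lerD2l.
  have z0 : forall F : V -> R, \sum_(j | E i j && a j i) F j = 0.
    by move=> F; apply: big_pred0 => j; exact: none.
  rewrite key hL (z0 (fun _ => dt i)) (z0 (fun _ => `|dt i|)) add0r addr0.
  apply: le_trans (ler_normB _ _) _.
  by rewrite lerD2l.
have S1 : \sum_i (`|(cG i - load E mG i) - (cH i - load E mH i)| +
    \sum_(j | E i j && a j i) `|dt i|) <=
    \sum_i (`|dc i| + \sum_(j | E i j && ~~ a j i && a i j) `|dt j|).
  by apply: ler_sum => i _; exact: hv.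
rewrite !big_split /= in S1.
have S2 : \sum_i \sum_(j | E i j && ~~ a j i && a i j) `|dt j| <=
          \sum_i \sum_(j | E i j && a j i) `|dt i|.
  apply: (@le_trans _ _ (\sum_i \sum_j (if E i j && a i j then `|dt j| else 0))).
    apply: ler_sum => i _; rewrite big_mkcond /=; apply: ler_sum => j _.
    by case: (E i j); case: (a j i); case: (a i j) => /=; rewrite ?lexx ?normr_ge0.
  rewrite exchange_big /= le_eqVlt; apply/orP; left; apply/eqP; apply: eq_bigr => i _.
  by rewrite [RHS]big_mkcond /=; apply: eq_bigr => j _; rewrite symE.
have S3 : \sum_i `|dc i| = `|cG s - cH s|.
  rewrite (bigD1 s) //= big1 ?addr0 // => i ne.
  by rewrite /dc cV_other // subrr normr0.
rewrite S3 in S1.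
lra.
Qed.

Unset Implicit Arguments.

Theorem lemma23 (R : realFieldType) (V : finType) (E : rel V)
    (cE : V -> V -> R) (cVG cVH : V -> R) (s : V)
    (symE : forall i j, E i j = E j i)
    (symcE : forall i j, cE i j = cE j i)
    (cE_ge0 : forall i j, E i j -> 0 <= cE i j)
    (cVG_ge0 : forall i, 0 <= cVG i) (cVH_ge0 : forall i, 0 <= cVH i)
    (cV_other : forall i, i != s -> cVG i = cVH i)
    (nG nH : nat) (EpG EpH : nat -> {set V * V})
    (muG muH : nat -> V -> V -> R)
    (runG : rising_tide_run E cVG cE nG EpG muG)
    (runH : rising_tide_run E cVH cE nH EpH muH)
    (nosimG : no_simultaneous_saturation E cVG nG muG)
    (nosimH : no_simultaneous_saturation E cVH nH muH)
    (sameD : forall u v, dep_arc E cVG nG EpG muG u v <-> dep_arc E cVH nH EpH muH u v) :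
  \sum_(i : V) `|(cVG i - load E (muG nG) i) - (cVH i - load E (muH nH) i)|
    <= `|cVG s - cVH s|.
Proof.
pose a u v := asb (dep_arc E cVG nG EpG muG u v).
have aG : forall u v, a u v -> dep_arc E cVG nG EpG muG u v by move=> u v /asbP.
have aH : forall u v, a u v -> dep_arc E cVH nH EpH muH u v.
  by move=> u v /asbP /sameD.
have naG : forall u v, ~~ a u v -> ~ dep_arc E cVG nG EpG muG u v.
  by move=> u v /asbP.
have naH : forall u v, ~~ a u v -> ~ dep_arc E cVH nH EpH muH u v.
  by move=> u v /asbP h /sameD.
pose tG i := if [pick j | a j i] is Some j then muG nG i j else 0.
pose tH i := if [pick j | a j i] is Some j then muH nH i j else 0.
apply: (@abstract_ineq R V E a symE cVG cVH s cV_other (muG nG) (muH nH) tG tH).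
- exact: (mu_sym symE symcE runG (leqnn nG)).1.
- exact: (mu_sym symE symcE runH (leqnn nH)).1.
- move=> i j aji; rewrite /tG; case: pickP => [j' aj'|none]; last by rewrite none in aji.
  exact: (arc_eq symE symcE runG (aG _ _ aji) (aG _ _ aj')).
- move=> i j aji; rewrite /tH; case: pickP => [j' aj'|none]; last by rewrite none in aji.
  exact: (arc_eq symE symcE runH (aH _ _ aji) (aH _ _ aj')).
- move=> i j eij n1 n2.
  rewrite (noarc_eq cE_ge0 runG eij (naG _ _ n1) (naG _ _ n2)).
  by rewrite (noarc_eq cE_ge0 runH eij (naH _ _ n1) (naH _ _ n2)).
- by move=> i j _ aji; exact: (arc_sat runG (aG _ _ aji)).
- by move=> i j _ aji; exact: (arc_sat runH (aH _ _ aji)).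
Qed.
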